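(* Let $n$ be even and let $G=D_n$ be the dihedral group of order $2n$. Let $H\le G$ be a subgroup isomorphic to a dihedral group, of index $2$ in $G$, and whose order is divisible by $4$. Then the restriction map $\operatorname{Res}:H^3(G,\mathbb{Z})\to H^3(H,\mathbb{Z})$ is injective.
   Context: $D_n=\langle r,s\mid r^n=s^2=e,\ srs=r^{-1}\rangle$. $\mathbb{Z}$ is the trivial $G$-module. *)

(* Defs.v *)
From mathcomp Require Import all_boot all_order all_algebra all_fingroup all_solvable.
Set Implicit Arguments. Unset Strict Implicit. Unset Printing Implicit Defensive.
Import GRing.Theory.

(* Group cohomology H^3(G, Z) of a finite group G with trivial coefficients Z,
   via the standard (inhomogeneous) cochain complex: n-cochains are functions
   G^n -> Z (represented as functions on the ambient finGroupType, only their
   values on G mattering). *)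

Definition cochain2 (gT : finGroupType) := gT -> gT -> int.
Definition cochain3 (gT : finGroupType) := gT -> gT -> gT -> int.

Definition d2 (gT : finGroupType) (c : cochain2 gT) : cochain3 gT :=
  fun g1 g2 g3 =>
    (c g2 g3 - c (g1 * g2)%g g3 + c g1 (g2 * g3)%g - c g1 g2)%R.

Definition d3 (gT : finGroupType) (f : cochain3 gT) (g1 g2 g3 g4 : gT) : int :=
  (f g2 g3 g4 - f (g1 * g2)%g g3 g4 + f g1 (g2 * g3)%g g4
   - f g1 g2 (g3 * g4)%g + f g1 g2 g3)%R.

Definition cocycle3 (gT : finGroupType) (G : {set gT}) (f : cochain3 gT) : Prop :=
  forall g1 g2 g3 g4, g1 \in G -> g2 \in G -> g3 \in G -> g4 \in G ->
    d3 f g1 g2 g3 g4 = 0%R.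

Definition coboundary3 (gT : finGroupType) (G : {set gT}) (f : cochain3 gT) : Prop :=
  exists c : cochain2 gT, forall g1 g2 g3, g1 \in G -> g2 \in G -> g3 \in G ->
    f g1 g2 g3 = d2 c g1 g2 g3.

(* Res : H^3(G,Z) = Z^3/B^3 -> H^3(H,Z) sends the class of a cocycle f on G to
   the class of its restriction to H^3.  Injectivity of this map between the
   quotient groups unfolds to: every 3-cocycle of G whose restriction to H is a
   coboundary on H is already a coboundary on G. *)
Definition res3_injective (gT : finGroupType) (G H : {set gT}) : Prop :=
  forall f : cochain3 gT, cocycle3 G f -> coboundary3 H f -> coboundary3 G f.

Definition is_dihedral (gT : finGroupType) (H : {set gT}) : Prop :=
  exists2 m : nat, (1 < m)%N & H \isog [set: 'D_(m.*2)].

(* Main.v *)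
Require Import Defs.
From mathcomp Require Import all_boot all_order all_algebra all_fingroup all_solvable.
From mathcomp Require Import ring lra zify.
Set Implicit Arguments. Unset Strict Implicit. Unset Printing Implicit Defensive.
Import GRing.Theory Num.Theory.

Notation isZ x := (x \is a Num.int).

Section DihS.
Local Open Scope group_scope.


Lemma cyc_comm (gT : finGroupType) (x a b : gT) :
  a \in <[x]> -> b \in <[x]> -> a * b = b * a.
Proof. by case/cycleP=> i -> /cycleP[j ->]; rewrite -!expgD addnC. Qed.

Lemma dih_struct (gT : finGroupType) (q : nat) (x y : gT) :
  (1 < q)%N -> <[x]> <*> <[y]> = [set: gT] -> x ^+ q = 1 -> y ^+ 2 = 1 ->
  x ^ y = x^-1 -> #|[set: gT]| = q.*2 ->
  [/\ #[x] = q, y \notin <[x]>,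
      (forall g h, g \notin <[x]> -> h \notin <[x]> -> g * h \in <[x]>),
      (forall g, g \notin <[x]> -> g * g = 1) &
      (forall g r, g \notin <[x]> -> r \in <[x]> -> g * r = r^-1 * g)].
Proof.
move=> q1 defG xq y2 xy oG.
have yy : y * y = 1 by rewrite -y2 expgS expg1.
have yV : y^-1 = y by apply/eqP; rewrite eq_invg_mul yy.
have ry r : r \in <[x]> -> y * r = r^-1 * y.
  case/cycleP=> i ->.
  have : (x ^+ i) ^ y = (x ^+ i)^-1 by rewrite conjXg xy expgVn.
  rewrite conjgE yV => h.
  by rewrite -h -!mulgA yy mulg1.
have nXY : <[y]> \subset 'N(<[x]>) by rewrite norms_cycle xy groupV cycle_id.
have defG' : <[x]> * <[y]> = [set: gT] by rewrite -norm_joinEr.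
have oxd : #[x] %| q by rewrite order_dvdn xq.
have oyd : #[y] %| 2 by rewrite order_dvdn y2.
have le1 : (q.*2 <= #[x] * #[y])%N.
  by rewrite -oG -defG' !orderE mul_cardG leq_pmulr ?cardG_gt0.
have oxle := dvdn_leq (ltnW q1) oxd.
have oyle := dvdn_leq (isT : (0 < 2)%N) oyd.
have ox : #[x] = q by nia.
have ynx : y \notin <[x]>.
  apply/negP => yx.
  have : [set: gT] \subset <[x]> by rewrite -defG' mul_subG // cycle_subG.
  by move/subset_leq_card; rewrite oG -orderE ox; lia.
have Hrefl g : g \notin <[x]> -> exists2 a, a \in <[x]> & g = a * y.
  move=> gn.
  have : g \in <[x]> * <[y]> by rewrite defG' inE.
  case/mulsgP => a b ax /cycleP[j ->] defg.
  move: defg; rewrite -(expg_mod _ y2).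
  have := ltn_pmod j (isT : (0 < 2)%N).
  case: (j %% 2)%N => [|[|//]] _ defg.
    by rewrite defg expg0 mulg1 ax in gn.
  by exists a; rewrite // defg expg1.
split=> //.
- move=> g h /Hrefl[a ax ->] /Hrefl[b bx ->].
  by rewrite mulgA -(mulgA a) ry // -!mulgA yy mulg1 groupM ?groupV.
- move=> g /Hrefl[a ax ->].
  by rewrite mulgA -(mulgA a) ry // -!mulgA yy mulg1 mulgV.
- move=> g r /Hrefl[a ax ->] rx.
  by rewrite -mulgA ry // !mulgA (cyc_comm ax) ?groupV.
Qed.

Lemma dih_noncyclic (gT : finGroupType) (q : nat) (x y : gT) :
  (1 < q)%N -> <[x]> <*> <[y]> = [set: gT] -> x ^+ q = 1 -> y ^+ 2 = 1 ->
  x ^ y = x^-1 -> #|[set: gT]| = q.*2 -> ~~ cyclic [set: gT].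
Proof.
move=> q1 defG xq y2 xy oG.
have [ox ynx cl sq refl] := dih_struct q1 defG xq y2 xy oG.
apply/negP => cG.
have xyn : x * y \notin <[x]> by rewrite groupMl ?cycle_id.
have o2 g : g \notin <[x]> -> #[g] = 2.
  move=> gn.
  have g1 : g != 1 by apply: contraNneq gn => ->; rewrite group1.
  have d2 : #[g] %| 2 by rewrite order_dvdn expgS expg1 sq.
  have := dvdn_leq (isT : (0 < 2)%N) d2; rewrite -order_gt1 in g1; lia.
have := eq_subG_cyclic cG (subsetT <[y]>) (subsetT <[x * y]>).
rewrite -!orderE !o2 // eqxx => /eqP e.
have {}e : <[y]> = <[x * y]> := e.
rewrite !cycle2g ?o2 // in e.
have : y \in [set 1; x * y] by rewrite -e !inE eqxx orbT.
rewrite !inE => /orP[/eqP y1 | /eqP].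
  by rewrite y1 group1 in ynx.
rewrite -{1}(mul1g y) => /mulIg x1.
by move: ox; rewrite -x1 order1; lia.
Qed.

End DihS.




Section Core.
Local Open Scope ring_scope.
Variables (gT : finGroupType) (x y : gT) (n k : nat).
Hypotheses (hnk : n = k.*2) (hk : (0 < k)%N) (ox : #[x]%g = n) (yy : (y * y = 1)%g).
Hypothesis yr : forall r, r \in <[x]>%g -> (y * r = r^-1 * y)%g.
Hypothesis ynx : y \notin <[x]>%g.
Hypothesis dec : forall g, g \notin <[x]>%g -> (g * y)%g \in <[x]>%g.
Variable w : gT -> gT -> rat.
Hypothesis wcoc : forall a b c, isZ (w b c - w (a*b)%g c + w a (b*c)%g - w a b).
Hypothesis wpair : isZ (w y (x^+k)%g - w (x^+k)%g y).

Lemma isZ_eq (a b : rat) : isZ a -> a = b -> isZ b.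
Proof. by move=> h <-. Qed.

Ltac zeq H := eapply isZ_eq; [exact: H|].

Definition idx (g : gT) : nat := find (fun i => (x ^+ i)%g == g) (iota 0 n).

Lemma n_gt1 : (1 < n)%N.
Proof. by rewrite hnk -addnn; case: k hk => // k' _; rewrite addSn ltnS addnS. Qed.

Lemma idx_exp i : (i < n)%N -> idx (x ^+ i)%g = i.
Proof.
move=> lt_in; rewrite /idx.
have hs : has (fun j => (x ^+ j)%g == (x ^+ i)%g) (iota 0 n).
  by apply/hasP; exists i; rewrite ?mem_iota ?add0n.
have := nth_find 0%N hs; have := hs; rewrite has_find size_iota => lt_f.
rewrite nth_iota // add0n eq_expg_mod_order ox !modn_small //.
by move/eqP.
Qed.

Lemma idx1 : idx 1%g = 0%N.
Proof. by rewrite -(expg0 x) idx_exp // hnk double_gt0. Qed.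

Lemma rot_exp r : r \in <[x]>%g -> exists2 i, (i < n)%N & r = (x ^+ i)%g.
Proof.
case/cycleP=> j ->; exists (j %% n)%N; first by rewrite ltn_pmod // hnk double_gt0.
by rewrite -ox expg_mod_order.
Qed.

Fixpoint Gam (t : rat) (i : nat) : rat :=
  if i is i'.+1 then t + Gam t i' - w x (x ^+ i')%g else w 1%g 1%g.

Definition u : rat := (w y y - w 1%g 1%g + 2%:R * w 1%g y) / 2%:R.

Definition gam t (g : gT) : rat :=
  if g \in <[x]>%g then Gam t (idx g) else Gam t (idx (g * y)%g) + u - w (g * y)%g y.

Definition psi t a b := w a b - (gam t a + gam t b - gam t (a * b)%g).

Lemma w1l c : isZ (w 1%g c - w 1%g 1%g).
Proof. by zeq (wcoc 1 1 c); rewrite !mul1g; ring. Qed.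

Lemma w1r g : isZ (w g 1%g - w 1%g 1%g).
Proof.
by zeq (rpredNr (wcoc g 1 1)); rewrite !mulg1; ring.
Qed.

Lemma psi_coc t a b c : isZ (psi t b c - psi t (a*b)%g c + psi t a (b*c)%g - psi t a b).
Proof.
by zeq (wcoc a b c); rewrite /psi mulgA; ring.
Qed.

Lemma gam_ry t r : r \in <[x]>%g -> gam t (r * y)%g = gam t r + u - w r y.
Proof.
move=> rx; rewrite /gam groupMl // (negbTE ynx) rx -mulgA yy mulg1 //.
Qed.

Lemma gam1 t : gam t 1%g = w 1%g 1%g.
Proof. by rewrite /gam group1 idx1. Qed.

Lemma gam_exp t i : (i < n)%N -> gam t (x ^+ i)%g = Gam t i.
Proof. by move=> hi; rewrite /gam mem_cycle idx_exp. Qed.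

Section FixT.
Variable t : rat.
Hypothesis clos : isZ (Gam t n - Gam t 0).

Lemma psi_x_rot i : (i < n)%N -> isZ (psi t x (x ^+ i)%g).
Proof.
move=> hi; rewrite /psi (gam_exp t hi) -expgS.
have gx : gam t x = Gam t 1 by rewrite -{1}(expg1 x) gam_exp ?n_gt1.
rewrite gx.
have h1 : Gam t 1 = t + w 1%g 1%g - w x 1%g by rewrite /= expg0.
have := hi; rewrite leq_eqVlt => /orP[/eqP hin | hin].
  have -> : (x ^+ i.+1)%g = 1%g by rewrite hin -ox expg_order.
  rewrite gam1 h1.
  zeq (rpredB (w1r x) clos); rewrite -hin /=; ring.
rewrite gam_exp // /= ?expg0; zeq (w1r x); ring.
Qed.

Lemma psi_x_all h : isZ (psi t x h).
Proof.
case hx: (h \in <[x]>%g).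
  by case/rot_exp: hx => i hi ->; apply: psi_x_rot.
have [r rx ->] : exists2 r, r \in <[x]>%g & h = (r * y)%g.
  by exists (h * y)%g; [apply: dec; rewrite hx | rewrite -mulgA yy mulg1].
have [i hi ri] := rot_exp rx.
zeq (rpredD (wcoc x r y) (psi_x_rot hi)); rewrite -ri.
rewrite /psi mulgA (gam_ry t rx) (gam_ry t (groupM (cycle_id x) rx)); ring.
Qed.

Lemma psi_1 c : isZ (psi t 1%g c).
Proof. by rewrite /psi mul1g gam1; zeq (w1l c); ring. Qed.

Lemma psi_rot r c : r \in <[x]>%g -> isZ (psi t r c).
Proof.
case/cycleP=> i ->{r}; elim: i c => [|i IH] c; first by rewrite expg0 psi_1.
rewrite expgS.
have H := rpredB (rpredD (IH c) (psi_x_all (x ^+ i * c)%g)) (psi_coc t x (x ^+ i)%g c).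
zeq (rpredB H (psi_x_all (x ^+ i)%g)); ring.
Qed.

Definition phi c := psi t y c.

Lemma phi_rot r c : r \in <[x]>%g -> isZ (phi (r * c)%g - phi c - phi r).
Proof.
move=> rx.
have rix : r^-1%g \in <[x]>%g by rewrite groupV.
have H1 := psi_coc t y r c.
have H2 := psi_coc t r^-1%g y c.
rewrite yr // in H1.
have H := rpredD (rpredB (rpredB H1 H2) (psi_rot c rx)) (psi_rot (y * c)%g rix).
zeq (rpredB H (psi_rot y rix)); rewrite /phi; ring.
Qed.

Lemma phi_1 : isZ (phi 1%g).
Proof. by rewrite /phi /psi mulg1 gam1; zeq (w1r y); ring. Qed.

Lemma phi_y : phi y = 0.
Proof.
rewrite /phi /psi yy gam1.
have -> : gam t y = gam t (1 * y)%g by rewrite mul1g.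
rewrite gam_ry ?group1 // gam1 /u; by field.
Qed.

Lemma phi_mult i : isZ (phi (x ^+ i)%g - i%:R * phi x).
Proof.
elim: i => [|i IH]; first by rewrite expg0 mul0r subr0 phi_1.
zeq (rpredD IH (phi_rot (x ^+ i)%g (cycle_id x))).
rewrite expgS; rewrite -addn1 natrD; ring.
Qed.

Lemma phiC : isZ (k%:R * phi x).
Proof.
have H := phi_mult k.
suff Hz : isZ (phi (x ^+ k)%g).
  by zeq (rpredNr (rpredB H Hz)); ring.
set z := (x ^+ k)%g.
have zx : z \in <[x]>%g by rewrite mem_cycle.
have zz : z^-1%g = z.
  apply/eqP; rewrite eq_invg_mul -expgD addnn -hnk -ox expg_order //.
have yz : (y * z = z * y)%g by rewrite yr // zz.
zeq (rpredD wpair (psi_rot y zx)).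
rewrite /phi /psi yz; ring.
Qed.

Lemma all_psi : isZ (phi x) -> forall a c, isZ (psi t a c).
Proof.
move=> Hx.
have Hrot i : isZ (phi (x ^+ i)%g).
  by have := rpredD (phi_mult i) (rpredM (natr_int _ i) Hx); rewrite subrK.
have Hphi c : isZ (phi c).
  case hc: (c \in <[x]>%g); first by case/cycleP: hc => i ->.
  have [r rx ->] : exists2 r, r \in <[x]>%g & c = (r * y)%g.
    by exists (c * y)%g; [apply: dec; rewrite hc | rewrite -mulgA yy mulg1].
  case/cycleP: (rx) => i ri.
  zeq (rpredD (phi_rot y rx) (Hrot i)).
  by rewrite -ri phi_y; ring.
move=> a c.
case ha: (a \in <[x]>%g); first exact: psi_rot.
have [r rx ->] : exists2 r, r \in <[x]>%g & a = (r * y)%g.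
  by exists (a * y)%g; [apply: dec; rewrite ha | rewrite -mulgA yy mulg1].
have H := psi_coc t r y c.
have H1 := Hphi c; rewrite /phi in H1.
zeq (rpredB (rpredD (rpredB H1 H) (psi_rot (y * c)%g rx)) (psi_rot y rx)).
ring.
Qed.

End FixT.

Lemma Gam_lin t i : Gam t i = i%:R * t + Gam 0 i.
Proof.
elim: i => [|i IH] /=; first by rewrite mul0r add0r.
by rewrite IH -addn1 natrD; ring.
Qed.

Lemma gamy t : gam t y = w 1%g 1%g + u - w 1%g y.
Proof.
by rewrite -{1}(mul1g y) gam_ry ?group1 // gam1.
Qed.

Lemma gamx t : gam t x = Gam t 1.
Proof. by rewrite -{1}(expg1 x) gam_exp ?n_gt1. Qed.

Lemma phi_lin t : psi t y x = psi 0 y x + (n%:R - 2%:R) * t.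
Proof.
have xn : (x^-1 = x ^+ n.-1)%g.
  apply/eqP; rewrite eq_invg_mul -expgS prednK; last by rewrite hnk double_gt0.
  by rewrite -ox expg_order.
have hn1 : (n.-1 < n)%N by rewrite prednK ?leqnn // hnk double_gt0.
rewrite /psi !gamy yr ?cycle_id // xn !gam_ry ?mem_cycle //.
rewrite !gam_exp // !gamx (Gam_lin t 1) (Gam_lin t n.-1) (Gam_lin 0 1).
rewrite -subn1 natrB; last by rewrite hnk double_gt0.
ring.
Qed.

Lemma core_exists : exists gm : gT -> rat,
  forall a b, isZ (w a b - (gm a + gm b - gm (a * b)%g)).
Proof.
have n0 : n%:R != 0 :> rat by rewrite pnatr_eq0 hnk double_eq0 -lt0n.
pose t0 := (Gam 0 0 - Gam 0 n) / n%:R.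
have clos_of d : isZ (n%:R * d) -> isZ (Gam (t0 + d) n - Gam (t0 + d) 0).
  move=> H; zeq H; rewrite (Gam_lin (t0 + d) n) (Gam_lin (t0 + d) 0) /t0.
  by field.
have cl0 : isZ (Gam (t0 + 0) n - Gam (t0 + 0) 0) by apply: clos_of; rewrite mulr0 rpred0.
rewrite addr0 in cl0.
have c0Z := phiC cl0.
rewrite /phi in c0Z.
pose c0 := psi t0 y x.
have nk : n%:R = 2%:R * k%:R :> rat by rewrite hnk -addnn natrD; ring.
have cl1 : isZ (Gam (t0 + c0 / 2%:R) n - Gam (t0 + c0 / 2%:R) 0).
  apply: clos_of; zeq c0Z; rewrite nk /c0; by field.
have Hx : isZ (phi (t0 + c0 / 2%:R) x).
  rewrite /phi; zeq c0Z.
  rewrite [X in _ = X]phi_lin /c0 (phi_lin t0) nk; by field.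
exists (gam (t0 + c0 / 2%:R)) => a b.
exact: (all_psi cl1 Hx a b).
Qed.

End Core.


Section MainS.
Local Open Scope ring_scope.


Definition Fq (gT : finGroupType) (f : cochain3 gT) (a b : gT) : rat :=
  \sum_(v : gT) (f a b v)%:~R.

Lemma sum_coc (gT : finGroupType) (f : cochain3 gT) : cocycle3 [set: gT] f ->
  forall a b c, #|gT|%:R * (f a b c)%:~R =
    - (Fq f b c - Fq f (a * b)%g c + Fq f a (b * c)%g - Fq f a b).
Proof.
move=> fcoc a b c.
have H : \sum_(v : gT) ((f b c v)%:~R - (f (a*b)%g c v)%:~R + (f a (b*c)%g v)%:~R
   - (f a b (c*v)%g)%:~R + (f a b c)%:~R : rat) = 0.
  apply: big1 => v _; have := fcoc a b c v; rewrite !inE => /(_ isT isT isT isT) e.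
  by have := congr1 (fun z : int => z%:~R : rat) e; rewrite /d3 /= !(intrD, intrN).
have E : \sum_(i : gT) ((f a b c)%:~R : rat) = #|gT|%:R * (f a b c)%:~R.
  by rewrite sumr_const mulr_natl.
rewrite !(big_split, sumrB) /= !sumrN E in H.
have R : \sum_(i : gT) ((f a b (c*i)%g)%:~R : rat) = Fq f a b.
  by symmetry; rewrite /Fq (reindex_inj (mulgI c)).
rewrite R in H.
by move: H; rewrite -!/(Fq f _ _) => /eqP; rewrite addrC addr_eq0 => /eqP.
Qed.

Lemma sym_H (gT : finGroupType) (H : {group gT}) (be : gT -> gT -> rat) :
  (forall a b c, a \in H -> b \in H -> c \in H ->
     be b c - be (a * b)%g c + be a (b * c)%g - be a b = 0) ->
  forall a b, a \in H -> b \in H -> (a * b = b * a)%g -> be a b = be b a.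
Proof.
move=> Hc.
pose B a := \sum_(v in H) be a v.
have key a b : a \in H -> b \in H -> #|H|%:R * be a b = B a + B b - B (a * b)%g.
  move=> aH bH.
  have S : \sum_(v in H) (be b v - be (a * b)%g v + be a (b * v)%g - be a b) = 0.
    by apply: big1 => v vH; apply: Hc.
  have E : \sum_(v in H) be a b = #|H|%:R * be a b by rewrite sumr_const mulr_natl.
  rewrite !(big_split, sumrB) /= !sumrN E in S.
  have R : \sum_(v in H) be a (b * v)%g = B a.
    symmetry; rewrite /B (reindex_inj (mulgI b)) /=.
    by apply: eq_bigl => v; rewrite groupMl.
  rewrite R -/(B b) -/(B (a * b)%g) in S.
  by move/eqP: S; rewrite subr_eq0 => /eqP <-; ring.
move=> a b aH bH ab.
have N0 : (#|H|%:R : rat) != 0 by rewrite pnatr_eq0 -lt0n cardG_gt0.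
apply: (mulfI N0); rewrite key // key // ab; ring.
Qed.

Lemma res_inj_generic (gT : finGroupType) (H : {group gT}) (x y : gT) (n k : nat) :
  n = k.*2 -> (0 < k)%N -> #[x]%g = n -> (y * y = 1)%g ->
  (forall r, r \in <[x]>%g -> (y * r = r^-1 * y)%g) -> y \notin <[x]>%g ->
  (forall g, g \notin <[x]>%g -> (g * y)%g \in <[x]>%g) ->
  y \in H -> (x ^+ k)%g \in H -> res3_injective [set: gT] H.
Proof.
move=> hnk hk ox yy yr ynx dec yH zH f fcoc [cH fH].
have N0 : (#|gT|%:R : rat) != 0.
  by rewrite pnatr_eq0 -lt0n; apply/card_gt0P; exists 1%g.
pose al a b := Fq f a b / #|gT|%:R.
have d2al a b c : al b c - al (a * b)%g c + al a (b * c)%g - al a b = - (f a b c)%:~R.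
  apply: (mulfI N0); rewrite mulrN sum_coc // /al; by field.
have wcoc a b c : isZ (al b c - al (a * b)%g c + al a (b * c)%g - al a b).
  by rewrite d2al rpredN intr_int.
set z := (x ^+ k)%g.
have zx : z \in <[x]>%g by rewrite mem_cycle.
have zz : z^-1%g = z.
  by apply/eqP; rewrite eq_invg_mul -expgD addnn -hnk -ox expg_order.
have yz : (y * z = z * y)%g by rewrite yr // zz.
have wpair : isZ (al y z - al z y).
  pose be a b := al a b + (cH a b)%:~R.
  have bc a b c : a \in H -> b \in H -> c \in H ->
      be b c - be (a * b)%g c + be a (b * c)%g - be a b = 0.
    move=> aH bH cH'; have := d2al a b c; rewrite fH // /d2 /be.
    rewrite !(intrD, intrN) => e; lra.
  have e := sym_H bc yH zH yz.
  have -> : al y z - al z y = (cH z y)%:~R - (cH y z)%:~R by move: e; rewrite /be; lra.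
  by rewrite rpredB ?intr_int.
have [gm Hgm] := core_exists hnk hk ox yy yr ynx dec wcoc wpair.
exists (fun a b => Num.floor (gm a + gm b - gm (a * b)%g - al a b)) => a1 b1 c1 _ _ _.
apply: (@intr_inj rat); rewrite /d2 !(intrD, intrN).
have HZ a' b' : isZ (gm a' + gm b' - gm (a' * b')%g - al a' b').
  by eapply isZ_eq; [exact: (rpredNr (Hgm a' b'))|]; ring.
rewrite !floorK ?HZ //.
have := d2al a1 b1 c1; rewrite mulgA; lra.
Qed.


End MainS.

Theorem lemma2p2 (n : nat) (n_gt0 : (0 < n)%N) (n_even : ~~ odd n)
    (H : {group 'D_(n.*2)}) :
  is_dihedral H ->
  (#|[set: 'D_(n.*2)] : H|)%g = 2 ->
  (4 %| #|H|)%N ->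
  res3_injective [set: 'D_(n.*2)] H.
Proof.
move=> [m m1 isoH] idx2 H4.
have n1 : (1 < n)%N by rewrite ltn_neqAle n_gt0 andbT; apply: contraNneq n_even => <-.
have oG := card_dihedral n1.
have /existsP[[x y0] /= /eqP[defG xn y2 xy]] := isoGrp_hom (Grp_dihedral n1).
have [ox y0nx cl sq refl] := dih_struct n1 defG xn y2 xy oG.
have oH : #|H| = n.
  by have := Lagrange (subsetT H); rewrite idx2 oG muln2 => /double_inj.
have sqH g : (g * g)%g \in H.
  case gH: (g \in H); first by rewrite groupM.
  apply/negPn/negP => ggn.
  have gD : g \in [set: 'D_(n.*2)] :\: H by rewrite !inE gH.
  have : (g * g)%g \in [set: 'D_(n.*2)] :\: H by rewrite !inE ggn.
  rewrite -(rcoset_index2 (subsetT H) idx2 gD).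
  by case/rcosetP => h hH /mulIg e; rewrite e hH in gH.
have [y yH ynx] : exists2 y, y \in H & y \notin <[x]>%g.
  apply/subsetPn/negP => sHx.
  have cH' : cyclic H := cyclicS sHx (cycle_cyclic x).
  rewrite (isog_cyclic isoH) in cH'.
  have /existsP[[x2 y2'] /= /eqP[defG2 xm y22 xy2]] := isoGrp_hom (Grp_dihedral m1).
  by have := dih_noncyclic m1 defG2 xm y22 xy2 (card_dihedral m1); rewrite cH'.
pose k := n./2.
have hnk : n = k.*2.
  by rewrite /k -[n in LHS](odd_double_half n) (negbTE n_even) add0n.
have k_even : ~~ odd k.
  move: H4; rewrite oH hnk -mul2n (_ : 4 = 2 * 2)%N // dvdn_pmul2l //.
  by rewrite dvdn2.
have k4 : k = (k./2).*2 by rewrite -[k in LHS](odd_double_half k) (negbTE k_even) add0n.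
have hk : (0 < k)%N by move: n_gt0; rewrite hnk double_gt0.
have zH : (x ^+ k)%g \in H.
  rewrite (_ : (x ^+ k)%g = (x ^+ k./2 * x ^+ k./2)%g) //; by rewrite -expgD addnn -k4.

apply: (res_inj_generic hnk hk ox (sq y ynx) (fun r rx => refl y r ynx rx) ynx (fun g gn => cl g y gn ynx) yH zH).
Qed.
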